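(* (1) For all terms $t,s$, variable $x$ and type $A$: if $t,s\in\mathrm{SN}$ and $t\{x:=s\}\in[\![A]\!]$, then $(\lambda x.t)s\in[\![A]\!]$. (2) For all terms $t_1,t_2$ and types $A_1,A_2$: if $t_1\in[\![A_1]\!]$ and $t_2\in[\![A_2]\!]$, then $\pi_i\langle t_1,t_2\rangle\in[\![A_i]\!]$ for $i=1,2$.
   Context: Terms: $t,s,u ::= x \mid \lambda x.t \mid ts \mid \langle t,s\rangle \mid \pi_1 t \mid \pi_2 t$ (up to $\alpha$-renaming); $t\{x:=s\}$ is capture-avoiding substitution. Top-level rules: $(\lambda x.t)s \mapsto t\{x:=s\}$; $\pi_i\langle t_1,t_2\rangle \mapsto t_i$ ($i=1,2$); $\langle t,s\rangle u \mapsto \langle tu, su\rangle$; $\pi_i(\lambda x.t)\mapsto \lambda x.\pi_i t$ ($i=1,2$); $\to_{\mathsf{dist}}$ is the closure of these rules under all term constructors. $\mathrm{SN}$ is the set of strongly normalizing terms for $\to_{\mathsf{dist}}$. Types: $A ::= \tau \mid A\Rightarrow A \mid A\wedge A$. Interpretation: $[\![\tau]\!]=\mathrm{SN}$; $[\![A\Rightarrow B]\!]=\{t\mid \forall s\in[\![A]\!],\ ts\in[\![B]\!]\}$; $[\![A\wedge B]\!]=\{t\mid \pi_1t\in[\![A]\!]\text{ and }\pi_2 t\in[\![B]\!]\}$. *)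

(* Defs.v *)
(* Lambda-terms with pairs, de Bruijn indices (alpha-equivalence built in). *)
From Stdlib Require Import Arith.

Inductive term : Type :=
  | var  : nat -> term
  | lam  : term -> term
  | app  : term -> term -> term
  | pair : term -> term -> term
  | proj1 : term -> term
  | proj2 : term -> term.

Fixpoint lift (k c : nat) (t : term) : term :=
  match t with
  | var n => if c <=? n then var (n + k) else var n
  | lam t => lam (lift k (S c) t)
  | app t s => app (lift k c t) (lift k c s)
  | pair t s => pair (lift k c t) (lift k c s)
  | proj1 t => proj1 (lift k c t)
  | proj2 t => proj2 (lift k c t)
  end.

(* subst t j s : capture-avoiding substitution of s for index j in t,
   decrementing the free indices above j (the binder is removed). *)
Fixpoint subst (t : term) (j : nat) (s : term) : term :=
  match t with
  | var n => if n =? j then s else if j <? n then var (pred n) else var n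
  | lam t => lam (subst t (S j) (lift 1 0 s))
  | app t u => app (subst t j s) (subst u j s)
  | pair t u => pair (subst t j s) (subst u j s)
  | proj1 t => proj1 (subst t j s)
  | proj2 t => proj2 (subst t j s)
  end.

Inductive step : term -> term -> Prop :=
  | st_beta  : forall t s, step (app (lam t) s) (subst t 0 s)
  | st_pi1   : forall t1 t2, step (proj1 (pair t1 t2)) t1
  | st_pi2   : forall t1 t2, step (proj2 (pair t1 t2)) t2
  | st_pairapp : forall t s u, step (app (pair t s) u) (pair (app t u) (app s u))
  | st_pi1lam : forall t, step (proj1 (lam t)) (lam (proj1 t))
  | st_pi2lam : forall t, step (proj2 (lam t)) (lam (proj2 t))
  | st_lam   : forall t t', step t t' -> step (lam t) (lam t')
  | st_appl  : forall t t' s, step t t' -> step (app t s) (app t' s)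
  | st_appr  : forall t s s', step s s' -> step (app t s) (app t s')
  | st_pairl : forall t t' s, step t t' -> step (pair t s) (pair t' s)
  | st_pairr : forall t s s', step s s' -> step (pair t s) (pair t s')
  | st_proj1 : forall t t', step t t' -> step (proj1 t) (proj1 t')
  | st_proj2 : forall t t', step t t' -> step (proj2 t) (proj2 t').

Definition SN (t : term) : Prop := Acc (fun u v => step v u) t.

Inductive ty : Type :=
  | base  : nat -> ty
  | arrow : ty -> ty -> ty
  | conj  : ty -> ty -> ty.

Fixpoint interp (A : ty) : term -> Prop :=
  match A with
  | base _ => SN
  | arrow A B => fun t => forall s, interp A s -> interp B (app t s)
  | conj A B => fun t => interp A (proj1 t) /\ interp B (proj2 t)
  end.

(* Main.v *)
Require Import Defs.
From Stdlib Require Import Arith Lia.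

Ltac cmp := repeat (cbn [lift subst]; match goal with
  | |- context [?a <=? ?b] => destruct (Nat.leb_spec a b)
  | |- context [?a <? ?b] => destruct (Nat.ltb_spec a b)
  | |- context [?a =? ?b] => destruct (Nat.eqb_spec a b)
  end); try (f_equal; lia); try lia.

Lemma lift_lift : forall t k k' c c', c' <= c ->
  lift k' c' (lift k c t) = lift k (c + k') (lift k' c' t).
Proof.
  induction t; intros k k' c c' H; cbn [lift].
  - destruct (Nat.leb_spec c n); cmp.
  - f_equal. rewrite IHt by lia. reflexivity.
  - f_equal; auto.
  - f_equal; auto.
  - f_equal; auto.
  - f_equal; auto.
Qed.

Lemma lift1 : forall s k c, lift 1 0 (lift k c s) = lift k (S c) (lift 1 0 s).
Proof. intros. rewrite lift_lift by lia. f_equal; lia. Qed.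

Lemma lift_subst : forall t j s k c, j <= c ->
  lift k c (subst t j s) = subst (lift k (S c) t) j (lift k c s).
Proof.
  induction t; intros j s k c H; cbn [lift subst].
  - destruct (Nat.eqb_spec n j); [cmp|].
    destruct (Nat.ltb_spec j n); cmp.
  - f_equal. rewrite IHt by lia. f_equal. symmetry; apply lift1.
  - f_equal; auto.
  - f_equal; auto.
  - f_equal; auto.
  - f_equal; auto.
Qed.

Lemma lift_subst2 : forall t j s k c, c <= j ->
  lift k c (subst t j s) = subst (lift k c t) (j + k) (lift k c s).
Proof.
  induction t; intros j s k c H; cbn [lift subst].
  - destruct (Nat.eqb_spec n j); [cmp|].
    destruct (Nat.ltb_spec j n); cmp.
  - f_equal. rewrite IHt by lia. f_equal. symmetry; apply lift1.
  - f_equal; auto.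
  - f_equal; auto.
  - f_equal; auto.
  - f_equal; auto.
Qed.

Lemma subst_lift : forall t i u, subst (lift 1 i t) i u = t.
Proof.
  induction t; intros i u; cbn [lift subst].
  - destruct (Nat.leb_spec i n); cmp.
  - f_equal; auto.
  - f_equal; auto.
  - f_equal; auto.
  - f_equal; auto.
  - f_equal; auto.
Qed.

Lemma subst_subst : forall t i j u s, i <= j ->
  subst (subst t i u) j s = subst (subst t (S j) (lift 1 i s)) i (subst u j s).
Proof.
  induction t; intros i j u s H; cbn [subst].
  - destruct (Nat.eqb_spec n i).
    + destruct (Nat.eqb_spec n (S j)); [lia|].
      destruct (Nat.ltb_spec (S j) n); [lia|]. cmp.
    + destruct (Nat.ltb_spec i n).
      * destruct (Nat.eqb_spec n (S j)).
        -- cmp. symmetry. apply subst_lift.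
        -- cmp.
      * cmp.
  - f_equal. rewrite IHt by lia. f_equal.
    + f_equal. rewrite (lift_lift s 1 1 i 0) by lia. f_equal; lia.
    + rewrite lift_subst2 by lia. f_equal; lia.
  - f_equal; auto.
  - f_equal; auto.
  - f_equal; auto.
  - f_equal; auto.
Qed.

Lemma step_lift : forall t t', step t t' -> forall k c, step (lift k c t) (lift k c t').
Proof.
  induction 1; intros k c; cbn [lift]; try (constructor; auto).
  rewrite lift_subst by lia. constructor.
Qed.

Lemma step_subst : forall t t', step t t' -> forall j s, step (subst t j s) (subst t' j s).
Proof.
  induction 1; intros j w; cbn [subst]; try (constructor; auto).
  rewrite (subst_subst t 0 j s w) by lia. constructor.
Qed.

Inductive star : term -> term -> Prop :=
  | star_refl : forall t, star t t
  | star_step : forall x y z, step x y -> star y z -> star x z.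

Lemma star_trans : forall x y z, star x y -> star y z -> star x z.
Proof. induction 1; intros; auto. econstructor; eauto. Qed.

Lemma star_cong : forall (f : term -> term), (forall a b, step a b -> step (f a) (f b)) ->
  forall a b, star a b -> star (f a) (f b).
Proof. intros f Hf a b H; induction H. constructor. econstructor; eauto. Qed.

Lemma star_subst : forall s s', step s s' -> forall t j, star (subst t j s) (subst t j s').
Proof.
  intros s s' Hs t. revert s s' Hs. induction t; intros s s' Hs j; cbn [subst].
  - destruct (n =? j). econstructor; [eauto|constructor].
    destruct (j <? n); constructor.
  - apply (star_cong lam); [intros; constructor; auto|].
    apply IHt. apply step_lift; auto.
  - eapply star_trans.
    + apply (star_cong (fun x => app x (subst t2 j s))); [intros; constructor; auto|]. eauto.
    + apply (star_cong (fun x => app (subst t1 j s') x)); [intros; constructor; auto|]. eauto.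
  - eapply star_trans.
    + apply (star_cong (fun x => pair x (subst t2 j s))); [intros; constructor; auto|]. eauto.
    + apply (star_cong (fun x => pair (subst t1 j s') x)); [intros; constructor; auto|]. eauto.
  - apply (star_cong proj1); [intros; constructor; auto|]. eauto.
  - apply (star_cong proj2); [intros; constructor; auto|]. eauto.
Qed.

Definition neutral (t : term) : Prop :=
  match t with lam _ => False | pair _ _ => False | _ => True end.

Lemma SN_app : forall u, SN u -> forall t x, u = app t x -> SN t.
Proof.
  induction 1 as [u _ IH]; intros t x E. subst u.
  constructor. intros t' Ht. eapply IH; [constructor; eauto|reflexivity].
Qed.

Lemma SN_proj1 : forall u, SN u -> forall t, u = proj1 t -> SN t.
Proof.
  induction 1 as [u _ IH]; intros t E. subst u.
  constructor. intros t' Ht. eapply IH; [constructor; eauto|reflexivity].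
Qed.

Lemma CR : forall A,
  (forall t, interp A t -> SN t) /\
  (forall t t', interp A t -> step t t' -> interp A t') /\
  (forall t, neutral t -> (forall t', step t t' -> interp A t') -> interp A t).
Proof.
  induction A as [n|A [A1 [A2 A3]] B [B1 [B2 B3]]|A [A1 [A2 A3]] B [B1 [B2 B3]]]; cbn [interp].
  - split; [auto|split].
    + intros t t' H Hs. exact (Acc_inv H Hs).
    + intros t _ H. constructor. exact H.
  - assert (Hv : interp A (var 0)).
    { apply A3. exact I. intros t' Hs. inversion Hs. }
    split; [|split].
    + intros t H. eapply SN_app; [apply B1; apply H; exact Hv|reflexivity].
    + intros t t' H Hs s Has. eapply B2; [apply H; exact Has|constructor; auto].
    + intros t Nt H s Has.
      assert (Ss : SN s) by (apply A1; auto).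
      induction Ss as [s _ IHs].
      apply B3; [exact I|].
      intros u Hu. inversion Hu; subst.
      * contradiction.
      * contradiction.
      * apply H; auto.
      * apply IHs; auto. eapply A2; eauto.
  - split; [|split].
    + intros t [H _]. eapply SN_proj1; [apply A1; exact H|reflexivity].
    + intros t t' [H1 H2] Hs. split.
      * eapply A2; [exact H1|constructor; auto].
      * eapply B2; [exact H2|constructor; auto].
    + intros t Nt H. split.
      * apply A3; [exact I|]. intros u Hu. inversion Hu; subst; try contradiction.
        apply H; auto.
      * apply B3; [exact I|]. intros u Hu. inversion Hu; subst; try contradiction.
        apply H; auto.
Qed.

Lemma star_interp : forall A t t', star t t' -> interp A t -> interp A t'.
Proof.
  intros A t t' H; induction H; auto. intros Hx. apply IHstar.
  destruct (CR A) as [_ [C2 _]]. eauto.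
Qed.

Lemma beta_exp : forall A t, SN t -> forall s, SN s -> interp A (subst t 0 s) ->
  interp A (app (lam t) s).
Proof.
  intros A t St. destruct (CR A) as [C1 [C2 C3]].
  induction St as [t _ IHt]. intros s Ss.
  induction Ss as [s Ss IHs]. intros H.
  apply C3; [exact I|]. intros u Hu. inversion Hu; subst.
  - exact H.
  - inversion H3; subst. apply IHt; auto.
    + constructor; auto.
    + eapply C2; [exact H|]. apply step_subst; auto.
  - apply IHs; auto. eapply star_interp; [|exact H]. apply star_subst; auto.
Qed.

Lemma pi1_exp : forall A t1, SN t1 -> forall t2, SN t2 -> interp A t1 ->
  interp A (proj1 (pair t1 t2)).
Proof.
  intros A t1 S1. destruct (CR A) as [C1 [C2 C3]].
  induction S1 as [t1 _ IH1]. intros t2 S2.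
  induction S2 as [t2 S2 IH2]. intros H.
  apply C3; [exact I|]. intros u Hu. inversion Hu; subst.
  - exact H.
  - inversion H1; subst.
    + apply IH1; auto. constructor; auto. eapply C2; eauto.
    + apply IH2; auto.
Qed.

Lemma pi2_exp : forall A t1, SN t1 -> forall t2, SN t2 -> interp A t2 ->
  interp A (proj2 (pair t1 t2)).
Proof.
  intros A t1 S1. destruct (CR A) as [C1 [C2 C3]].
  induction S1 as [t1 S1 IH1]. intros t2 S2.
  induction S2 as [t2 S2 IH2]. intros H.
  apply C3; [exact I|]. intros u Hu. inversion Hu; subst.
  - exact H.
  - inversion H1; subst.
    + apply IH1; auto.
    + apply IH2; auto. eapply C2; eauto.
Qed.

Theorem lemma6 :
  (forall (t s : term) (A : ty),
      SN t -> SN s -> interp A (subst t 0 s) -> interp A (app (lam t) s)) /\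
  (forall (t1 t2 : term) (A1 A2 : ty),
      interp A1 t1 -> interp A2 t2 ->
      interp A1 (proj1 (pair t1 t2)) /\ interp A2 (proj2 (pair t1 t2))).
Proof.
  split.
  - intros. apply beta_exp; auto.
  - intros t1 t2 A1 A2 H1 H2.
    destruct (CR A1) as [C1 _]. destruct (CR A2) as [D1 _].
    split.
    + apply pi1_exp; auto.
    + apply pi2_exp; auto.
Qed.
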